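(* Let $0\le m\le r\le n$. Every $L\in\mathcal L_{r,m}$ can be written uniquely as $L=\sum_{j=0}^r p_j(x)K_{rj}$ with $p_j\in\mathcal P_{r-m}$, and conversely every such sum lies in $\mathcal L_{r,m}$; i.e. $\mathcal L_{r,m}=\mathcal P_{r-m}\otimes\mathcal L_{r,r}$. Hence $\dim\mathcal L_{r,m}=(r+1)(r-m+1)$; in particular the space of operators of order at most $r$ mapping $\mathcal P_n$ into itself has dimension $(r+1)^2$.
   Context: $D=d/dx$. For $s\ge0$, $\mathcal P_s$ is the space of real polynomials in $x$ of degree at most $s$, and $\mathcal P_s=\{0\}$ for $s<0$. For $0\le m\le r$, $\mathcal L_{r,m}$ denotes the real vector space of linear differential operators $L=\sum_{i=0}^r a_i(x)D^i$ with $a_i\in\mathbb R[x]$ (order at most $r$) such that $L(\mathcal P_n)\subset\mathcal P_{n-m}$ (deficiency at least $m$ relative to $\mathcal P_n$). Pochhammer operator: $(a-xD)_k=(-1)^k(xD-a)(xD-(a-1))\cdots(xD-(a-k+1))$. $K_{rj}=\frac{1}{(r-j)!}(n-j-xD)_{r-j}D^j$. *)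

(* Defs.v *)
(* Differential operators with polynomial coefficients are
   represented in normal-ordered form  L = sum_i a_i(x) D^i  as elements of
   {poly {poly R}}: the outer variable is the formal D, the coefficient of
   'X^i is a_i. *)
From HB Require Import structures.
From mathcomp Require Import all_boot all_order all_algebra.
From mathcomp Require Import reals.
Set Implicit Arguments. Unset Strict Implicit. Unset Printing Implicit Defensive.
Import Order.TTheory GRing.Theory Num.Theory.
Local Open Scope ring_scope.

Section Ops.
Variable R : fieldType.

Definition inP (s : nat) (f : {poly R}) : bool := (size f <= s.+1)%N.

Definition act (L : {poly {poly R}}) (f : {poly R}) : {poly R} :=
  \sum_(i < size L) L`_i * f^`(i).

(* composition of differential operators (Leibniz rule):
   (a D^i)(b D^k) = sum_l C(i,l) a b^(l) D^(i-l+k) *)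
Definition opmul (A B : {poly {poly R}}) : {poly {poly R}} :=
  \sum_(i < size A) \sum_(k < size B) \sum_(l < i.+1)
     (('C(i, l))%:R * A`_i * (B`_k)^`(l)) *: 'X^(i - l + k).

Definition opD : {poly {poly R}} := 'X.
(* the operator x D *)
Definition opxD : {poly {poly R}} := ('X : {poly R}) *: 'X.

(* Pochhammer operator (a - xD)_k = prod_{i<k} (a - i - xD) *)
Fixpoint poch (a : R) (k : nat) : {poly {poly R}} :=
  match k with
  | 0 => 1
  | k'.+1 => opmul (poch a k') ((a - k'%:R)%:P%:P - opxD)
  end.

(* K_{rj} = 1/(r-j)! (n - j - xD)_{r-j} D^j *)
Definition Kop (r n j : nat) : {poly {poly R}} :=
  ((r - j)`!%:R^-1)%:P *: opmul (poch (n%:R - j%:R) (r - j)) (opD ^+ j).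

(* L in L_{r,m} (relative to P_n): order at most r and L(P_n) in P_{n-m} *)
Definition inL (r m n : nat) (L : {poly {poly R}}) : Prop :=
  (size L <= r.+1)%N /\ forall f, inP n f -> inP (n - m) (act L f).

(* the subspace S (of real-linear operators) has dimension d:
   it has a basis of d elements (over the real scalars) *)
Definition hasDim (S : {poly {poly R}} -> Prop) (d : nat) : Prop :=
  exists b : 'I_d -> {poly {poly R}},
    [/\ forall k, S (b k),
        (forall c : 'I_d -> R, \sum_k (c k)%:P *: b k = 0 -> forall k, c k = 0) &
        (forall L, S L -> exists c : 'I_d -> R, L = \sum_k (c k)%:P *: b k)].

End Ops.

(* Main.v *)
Require Import Defs.
From HB Require Import structures.
From mathcomp Require Import all_boot all_order all_algebra.
From mathcomp Require Import reals.
From mathcomp Require Import ring zify.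
Import Order.TTheory GRing.Theory Num.Theory.
Local Open Scope ring_scope.
Set Implicit Arguments. Unset Strict Implicit. Unset Printing Implicit Defensive.

Lemma natbound a b c x y : (b < a.+1 -> c < y -> a < x -> a - b + c < (x+y).-1)%N.
Proof. lia. Qed.

Lemma natbound2 x y k : (x <= k.+1 -> y <= 2 -> (x + y).-1 <= k.+2)%N.
Proof. lia. Qed.

Lemma natbound3 x y j r : (j <= r -> x <= (r - j).+1 -> y = j.+1 -> (x + y).-1 <= r.+1)%N.
Proof. lia. Qed.

Lemma nb_deg1 a b e r m n j k : (m <= r -> r <= n -> j < a -> a <= k -> k = n - r + j ->
   b <= (r - m).+1 -> e = k - a -> (b + e.+1).-1 <= n - m)%N.
Proof. lia. Qed.

Lemma nb_deg2 s r m n : (m <= r -> r <= n -> (s + (n - r).+1).-1 <= (n - m).+1 -> s <= (r - m).+1)%N.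
Proof. lia. Qed.

Lemma nb_clos b r m n j k : (m <= r -> r <= n -> j <= k -> k <= n - r + j ->
   b <= (r - m).+1 -> (b + (k - j).+1).-1 <= (n - m).+1)%N.
Proof. lia. Qed.

Section S.
Variable R : realType.
Implicit Types (L A B : {poly {poly R}}) (f g p q : {poly R}).

Lemma actE L f N : (size L <= N)%N -> act L f = \sum_(i < N) L`_i * f^`(i).
Proof.
move=> hN; rewrite /act (big_ord_widen N (fun i => L`_i * f^`(i)) hN) big_mkcond /=.
apply: eq_bigr => i _; case: ifP => // /negbT; rewrite -leqNgt => h.
by rewrite nth_default ?mul0r.
Qed.

Lemma act0 f : act 0 f = 0.
Proof. by rewrite /act size_poly0 big_ord0. Qed.

Lemma actD A B f : act (A + B) f = act A f + act B f.
Proof.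
set N := maxn (size A) (size B).
rewrite !(@actE _ _ N) ?leq_maxl ?leq_maxr ?(leq_trans (size_polyD _ _)) //.
by rewrite -big_split; apply: eq_bigr => i _; rewrite coefD mulrDl.
Qed.

Lemma actZ c A f : act (c *: A) f = c * act A f.
Proof.
rewrite !(@actE _ _ (size A)) ?size_scale_leq // mulr_sumr.
by apply: eq_bigr => i _; rewrite coefZ mulrA.
Qed.

Lemma actN A f : act (- A) f = - act A f.
Proof. by rewrite -scaleN1r actZ mulN1r. Qed.

Lemma actB A B f : act (A - B) f = act A f - act B f.
Proof. by rewrite actD actN. Qed.

Lemma act_sum (I : Type) (s : seq I) (P : pred I) (F : I -> {poly {poly R}}) f :
  act (\sum_(i <- s | P i) F i) f = \sum_(i <- s | P i) act (F i) f.
Proof. exact: (big_morph (fun L => act L f) (fun A B => actD A B f) (act0 f)). Qed.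

Lemma actXn e f : act 'X^e f = f^`(e).
Proof.
rewrite (@actE _ _ e.+1) ?size_polyXn // big_ord_recr /= coefXn eqxx mul1r.
by rewrite big1 ?add0r // => i _; rewrite coefXn (ltn_eqF (ltn_ord i)) mul0r.
Qed.

Lemma actC a f : act a%:P f = a * f.
Proof. by rewrite (@actE _ _ 1) ?size_polyC ?leq_b1 // big_ord1 coefC. Qed.

Lemma actfD L f g : act L (f + g) = act L f + act L g.
Proof. by rewrite /act -big_split; apply: eq_bigr => i _; rewrite derivnD mulrDr. Qed.

Lemma actfZ L (c : R) f : act L (c *: f) = c *: act L f.
Proof.
rewrite /act scaler_sumr; apply: eq_bigr => i _.
by rewrite derivnZ scalerAr.
Qed.

Lemma actf0 L : act L 0 = 0.
Proof. by rewrite /act big1 // => i _; rewrite linear0 mulr0. Qed.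

Lemma actf_sum L (I : Type) (s : seq I) (P : pred I) (F : I -> {poly R}) :
  act L (\sum_(i <- s | P i) F i) = \sum_(i <- s | P i) act L (F i).
Proof. exact: (big_morph (act L) (actfD L) (actf0 L)). Qed.

Lemma derivnn f a k : (f^`(k))^`(a) = f^`(a + k).
Proof. by rewrite /derivn iterD. Qed.

Lemma derivnM i p q :
  (p * q)^`(i) = \sum_(l < i.+1) (p^`(l) * q^`(i - l)) *+ 'C(i, l).
Proof.
elim: i => [|i IH]; first by rewrite big_ord1 bin0 mulr1n.
rewrite derivnS IH raddf_sum /=.
under eq_bigr => l _ do rewrite derivMn derivM mulrnDl -!derivnS.
rewrite big_split /= [in RHS]big_ord_recl subn0 bin0 mulr1n.
under [in RHS]eq_bigr => l _ do rewrite lift0 subSS binS mulrnDr.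
rewrite big_split /= addrC [in RHS]addrA; congr (_ + _).
rewrite big_ord_recl /= subn0 bin0 mulr1n; congr (_ + _).
rewrite [in RHS]big_ord_recr /= bin_small // mulr0n addr0.
apply: eq_bigr => l _ /=; rewrite /bump leq0n add0n add1n -[(q^`(i - l.+1))^`()]derivnS subnSK //.
Qed.
Lemma act_opmul A B f : act (opmul A B) f = act A (act B f).
Proof.
rewrite /opmul act_sum [RHS]/act; apply: eq_bigr => i _.
rewrite act_sum [act B f]/act raddf_sum /= mulr_sumr; apply: eq_bigr => k _.
rewrite act_sum derivnM mulr_sumr; apply: eq_bigr => l _.
rewrite actZ actXn derivnn; ring.
Qed.
Lemma act1 f : act 1 f = f.
Proof. by rewrite -polyC1 actC mul1r. Qed.

Lemma act_opxD f : act (opxD R) f = 'X * f^`().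
Proof. by rewrite /opxD actZ (actXn 1) derivn1. Qed.

Lemma act_poch (a : R) k s :
  act (poch a k) 'X^s = (\prod_(i < k) (a - i%:R - s%:R)) *: 'X^s.
Proof.
elim: k => [|k IH]; first by rewrite /= act1 big_ord0 scale1r.
rewrite /= act_opmul actB actC act_opxD derivXn.
have -> : ('X * ('X^(s.-1) *+ s) : {poly R}) = (s%:R : R) *: 'X^s.
  case: (s) => [|s']; first by rewrite !mulr0n mulr0 scale0r.
  by rewrite mulrnAr -exprS scaler_nat.
by rewrite mul_polyC -scalerBl actfZ IH scalerA big_ord_recr /= mulrC.
Qed.

Definition bcoef (r n j k : nat) : R :=
  (r - j)`!%:R^-1 * (\prod_(i < r - j) (n%:R - j%:R - i%:R - (k - j)%:R)) * (k ^_ j)%:R.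

Lemma act_Kop r n j k :
  act (Kop R r n j) 'X^k = (bcoef r n j k)%:P * 'X^(k - j).
Proof.
rewrite /Kop actZ act_opmul /opD actXn derivnXn -scaler_nat actfZ act_poch.
rewrite !scalerA !mul_polyC scalerA /bcoef; congr (_ *: _).
by ring.
Qed.
Lemma bcoef_lt r n j k : (k < j)%N -> bcoef r n j k = 0.
Proof. by move=> h; rewrite /bcoef ffact_small // mulr0. Qed.

Lemma bcoef_hi r n j k : (j <= k)%N -> (k <= n)%N -> (n - r + j < k)%N ->
  (r <= n)%N -> bcoef r n j k = 0.
Proof.
move=> h1 h2 h3 h4; rewrite /bcoef.
have hi : (n - k < r - j)%N by lia.
suff -> : \prod_(i < r - j) (n%:R - j%:R - i%:R - (k - j)%:R) = 0 :> R
  by rewrite mulr0 mul0r.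
apply/eqP/prodf_eq0; exists (Ordinal hi) => //=.
have e : (n%:R : R) = j%:R + (n - k)%:R + (k - j)%:R.
  by rewrite -!natrD; congr (_%:R); lia.
by rewrite e; apply/eqP; ring.
Qed.

Lemma bcoef_neq0 r n j k : (j <= k)%N -> (k <= n - r + j)%N -> (r <= n)%N ->
  bcoef r n j k != 0.
Proof.
move=> h1 h2 h4; rewrite /bcoef !mulf_neq0 //.
- by rewrite invr_eq0 pnatr_eq0 -lt0n fact_gt0.
- apply/prodf_neq0 => i _.
  have hi := ltn_ord i.
  have e : (n%:R : R) = j%:R + i%:R + (k - j)%:R + (n - k - i)%:R.
    by rewrite -!natrD; congr (_%:R); lia.
  have -> : (n%:R - j%:R - i%:R - (k - j)%:R : R) = (n - k - i)%:R.
    by rewrite e; ring.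
  rewrite pnatr_eq0; lia.
- by rewrite pnatr_eq0 -lt0n ffact_gt0.
Qed.
Lemma size_sum_le (I : Type) (s : seq I) (P : pred I) (F : I -> {poly {poly R}}) N :
  (forall i, P i -> (size (F i) <= N)%N) -> (size (\sum_(i <- s | P i) F i)%R <= N)%N.
Proof.
move=> h; elim/big_ind: _ => //; first by rewrite size_poly0.
by move=> x y hx hy; rewrite (leq_trans (size_polyD _ _)) // geq_max hx hy.
Qed.

Lemma size_opmul A B : (size (opmul A B) <= (size A + size B).-1)%N.
Proof.
apply: size_sum_le => i _; apply: size_sum_le => k _; apply: size_sum_le => l _.
rewrite (leq_trans (size_scale_leq _ _)) // size_polyXn.
by apply: natbound; apply: ltn_ord.
Qed.

Lemma size_poch (a : R) k : (size (poch a k) <= k.+1)%N.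
Proof.
elim: k => [|k IH] /=; first by rewrite size_poly1.
rewrite (leq_trans (size_opmul _ _)) //.
have h2 : (size ((a - k%:R)%:P%:P - opxD R)%R <= 2)%N.
  rewrite (leq_trans (size_polyD _ _)) // geq_max size_opp.
  rewrite (leq_trans (size_polyC_leq1 _)) //= /opxD.
  by rewrite (leq_trans (size_scale_leq _ _)) // size_polyX.
exact: natbound2 IH h2.
Qed.

Lemma size_Kop r n j : (j <= r)%N -> (size (Kop R r n j) <= r.+1)%N.
Proof.
move=> hj; rewrite /Kop (leq_trans (size_scale_leq _ _)) //.
rewrite (leq_trans (size_opmul _ _)) // /opD size_polyXn.
exact: natbound3 hj (size_poch _ _) (erefl _).
Qed.
Lemma size_psum_le (I : Type) (s : seq I) (P : pred I) (F : I -> {poly R}) N :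
  (forall i, P i -> (size (F i) <= N)%N) -> (size (\sum_(i <- s | P i) F i)%R <= N)%N.
Proof.
move=> h; elim/big_ind: _ => //; first by rewrite size_poly0.
by move=> x y hx hy; rewrite (leq_trans (size_polyD _ _)) // geq_max hx hy.
Qed.

Lemma size_term p (b : R) e : (size (p * (b%:P * 'X^e))%R <= (size p + e.+1).-1)%N.
Proof.
rewrite (leq_trans (size_polyMleq _ _)) // -!subn1 leq_sub2r // leq_add2l.
by rewrite mul_polyC (leq_trans (size_scale_leq _ _)) // size_polyXn.
Qed.

Section Main.
Variables (r n : nat).
Hypothesis hrn : (r <= n)%N.

Definition Ks (P : 'I_r.+1 -> {poly R}) := \sum_(j < r.+1) P j *: Kop R r n j.

Lemma act_Ks P k :
  act (Ks P) 'X^k = \sum_(j < r.+1) P j * ((bcoef r n j k)%:P * 'X^(k - j)).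
Proof. by rewrite act_sum; apply: eq_bigr => j _; rewrite actZ act_Kop. Qed.

Lemma size_Ks P : (size (Ks P) <= r.+1)%N.
Proof.
apply: size_sum_le => j _; rewrite (leq_trans (size_scale_leq _ _)) //.
by apply: size_Kop; rewrite -ltnS.
Qed.

Lemma act_inj0 L : (size L <= r.+1)%N -> (forall k, (k <= r)%N -> act L 'X^k = 0) -> L = 0.
Proof.
move=> hs h.
have key : forall i, (i <= r)%N -> L`_i = 0.
  elim/ltn_ind => i IH hi.
  have := h i hi; rewrite (actE _ hs) (bigD1 (Ordinal (hi : (i < r.+1)%N))) //= big1.
    rewrite addr0 derivnXn subnn expr0 ffactnn mulrnAr mulr1 => /eqP.
    by rewrite -scaler_nat scale_poly_eq0 pnatr_eq0 eqn0Ngt fact_gt0 /= => /eqP.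
  move=> t /eqP htne; case: (ltngtP t i) => hti.
  - by rewrite IH ?mul0r // (leq_trans _ hi) // ltnW.
  - by rewrite derivnXn ffact_small // mulr0n mulr0.
  - by exfalso; apply: htne; apply: val_inj.
apply/polyP => i; rewrite coef0; case: (leqP i r) => hi; first exact: key.
by rewrite nth_default // (leq_trans hs).
Qed.

Lemma Ks_uniq P : (forall k, (k <= r)%N -> act (Ks P) 'X^k = 0) -> forall j, P j = 0.
Proof.
move=> h.
have key : forall i (t : 'I_r.+1), val t = i -> P t = 0.
  elim/ltn_ind => i IH t hti.
  have hi : (i <= r)%N by rewrite -ltnS -hti ltn_ord.
  have := h i hi; rewrite act_Ks (bigD1 t) //= big1.
    rewrite addr0 hti subnn expr0 mulr1 => /eqP; rewrite mulf_eq0 polyC_eq0.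
    have hb : bcoef r n i i != 0 by apply: bcoef_neq0 => //; rewrite leq_addl.
    by rewrite (negbTE hb) orbF => /eqP.
  move=> t' ht'; case: (ltngtP t' i) => h'.
  - by rewrite (IH t') ?mul0r.
  - by rewrite bcoef_lt // polyC0 mul0r mulr0.
  - by exfalso; move/eqP: ht'; apply; apply: val_inj => /=; rewrite h' hti.
by move=> j; apply: (key j).
Qed.

Lemma Ks_add P (m : 'I_r.+1) d :
  Ks (fun j => P j + (if j == m then d else 0)) = Ks P + d *: Kop R r n m.
Proof.
rewrite /Ks.
have -> : d *: Kop R r n m = \sum_(j < r.+1) (if j == m then d else 0) *: Kop R r n j.
  rewrite (bigD1 m) //= eqxx big1 ?addr0 // => j /negbTE ->; by rewrite scale0r.
rewrite -big_split /=; apply: eq_bigr => j _; by rewrite scalerDl.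
Qed.

Lemma Ks_exists L : (size L <= r.+1)%N -> exists P, L = Ks P.
Proof.
move=> hs.
have step : forall m, (m <= r.+1)%N -> exists P : 'I_r.+1 -> {poly R},
    forall k, (k < m)%N -> act (Ks P) 'X^k = act L 'X^k.
  elim => [_|m IH hm]; first by exists (fun _ => 0).
  case: (IH (ltnW hm)) => P hP.
  set d := (bcoef r n m m)^-1 *: (act L 'X^m - act (Ks P) 'X^m).
  exists (fun j => P j + (if j == Ordinal hm then d else 0)) => k hk.
  rewrite Ks_add actD actZ act_Kop /=.
  move: hk; rewrite ltnS leq_eqVlt => /orP [/eqP ->|hk].
    have hb : bcoef r n m m != 0 by apply: bcoef_neq0 => //; rewrite leq_addl.
    rewrite subnn expr0 mulr1 mulrC mul_polyC /d scalerA mulfV // scale1r.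
    by rewrite addrC subrK.
  by rewrite bcoef_lt // polyC0 mul0r mulr0 addr0 hP.
case: (step r.+1 (leqnn _)) => P hP; exists P.
apply/eqP; rewrite -subr_eq0; apply/eqP; apply: act_inj0.
  by rewrite (leq_trans (size_polyD _ _)) // size_polyN geq_max hs size_Ks.
by move=> k hk; rewrite actB hP ?subrr.
Qed.

Lemma Ks_deg m0 P : (m0 <= r)%N ->
  (forall k, (k <= n)%N -> (size (act (Ks P) 'X^k) <= (n - m0).+1)%N) ->
  forall j, (size (P j) <= (r - m0).+1)%N.
Proof.
move=> hm h.
have key : forall t (j : 'I_r.+1), (r - j)%N = t -> (size (P j) <= (r - m0).+1)%N.
  elim/ltn_ind => t IH j hjt.
  have hj : (j <= r)%N by rewrite -ltnS.
  set k := (n - r + j)%N.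
  have hk : (k <= n)%N by rewrite /k; move: hj hrn; clear; lia.
  have := h k hk; rewrite act_Ks (bigD1 j) //=.
  set S := \sum_(i < r.+1 | i != j) _.
  have hS : (size S <= n - m0)%N.
    apply: size_psum_le => t' ht'; case: (ltngtP t' j) => h'.
    - rewrite bcoef_hi ?polyC0 ?mul0r ?mulr0 ?size_poly0 //.
      + by rewrite /k (leq_trans (ltnW h')) // leq_addl.
      + by rewrite /k; rewrite ltn_add2l.
    - case: (ltnP k t') => hkt.
        by rewrite bcoef_lt ?polyC0 ?mul0r ?mulr0 ?size_poly0.
      rewrite (leq_trans (size_term _ _ _)) //.
      apply: (nb_deg1 hm hrn h' hkt (erefl _) _ (erefl _)).
      by apply: (IH (r - t')%N) => //; rewrite -hjt; move: h' (ltn_ord t'); clear; lia.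
    - by exfalso; move/eqP: ht'; apply; apply: val_inj.
  have hkj : (k - j)%N = (n - r)%N by rewrite /k addnK.
  rewrite hkj => hA.
  have hB : (size (P j * ((bcoef r n j k)%:P * 'X^(n - r)))%R <= (n - m0).+1)%N.
    have -> : P j * ((bcoef r n j k)%:P * 'X^(n - r)) =
      (P j * ((bcoef r n j k)%:P * 'X^(n - r)) + S) - S by rewrite addrK.
    rewrite (leq_trans (size_polyD _ _)) // size_polyN geq_max hA /=.
    by rewrite (leq_trans hS).
  have [->|hP0] := eqVneq (P j) 0; first by rewrite size_poly0.
  have hb : bcoef r n j k != 0 by apply: bcoef_neq0 => //; rewrite /k leq_addl.
  move: hB; rewrite mul_polyC size_mul // ?scale_poly_eq0 ?negb_or ?hb ?expf_neq0 ?polyX_eq0 //.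
  rewrite size_scale // size_polyXn; exact: nb_deg2.
by move=> j; exact: (key _ j (erefl _)).
Qed.

Lemma Ks_closed m0 (P : 'I_r.+1 -> {poly R}) : (m0 <= r)%N -> (forall j, (size (P j) <= (r - m0).+1)%N) ->
  forall f, (size f <= n.+1)%N -> (size (act (Ks P) f) <= (n - m0).+1)%N.
Proof.
move=> hm hP f hf.
have -> : f = \sum_(k < size f) f`_k *: 'X^k by rewrite -poly_def coefK.
rewrite actf_sum; apply: size_psum_le => k _.
rewrite actfZ (leq_trans (size_scale_leq _ _)) // act_Ks.
have hk : (k <= n)%N by rewrite -ltnS (leq_trans (ltn_ord k)).
apply: size_psum_le => j _.
case: (ltnP k j) => h1.
  by rewrite bcoef_lt ?polyC0 ?mul0r ?mulr0 ?size_poly0.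
case: (ltnP (n - r + j) k) => h2.
  by rewrite bcoef_hi ?polyC0 ?mul0r ?mulr0 ?size_poly0.
rewrite (leq_trans (size_term _ _ _)) //; exact: (nb_clos hm hrn h1 h2 (hP j)).
Qed.

End Main.
Lemma poly_trunc (p : {poly R}) N : (size p <= N)%N -> \sum_(j < N) p`_j *: 'X^j = p.
Proof.
move=> h; rewrite -poly_def; apply/polyP => i; rewrite coef_poly.
by case: ltnP => // hi; rewrite nth_default // (leq_trans h).
Qed.

Lemma coef_trunc (c : nat -> R) N i : (\sum_(j < N) c j *: 'X^j)`_i = if (i < N)%N then c i else 0.
Proof. by rewrite -poly_def coef_poly. Qed.

Lemma coef_ord N (F : 'I_N -> R) (j0 : 'I_N) : (\sum_(j < N) F j *: 'X^j)`_j0 = F j0.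
Proof.
rewrite coef_sum (bigD1 j0) //= coefZ coefXn eqxx mulr1 big1 ?addr0 // => j hj.
rewrite coefZ coefXn; case: eqP => [h|]; last by rewrite mulr0.
by move/eqP: hj; case; apply: val_inj.
Qed.

Section Dim.
Variables (r n m : nat).
Hypothesis hrn : (r <= n)%N.
Hypothesis hmr : (m <= r)%N.

Let s := (r - m).+1.
Definition ij (k : 'I_(r.+1 * s)) := enum_val (cast_ord (esym (mxvec_cast r.+1 s)) k).
Lemma ij_mx i j : ij (mxvec_index i j) = (i, j).
Proof. by rewrite /ij /mxvec_index cast_ordK enum_rankK. Qed.

Definition bas (k : 'I_(r.+1 * s)) : {poly {poly R}} := 'X^((ij k).2) *: Kop R r n ((ij k).1).

Lemma reidx (F : 'I_(r.+1 * s) -> {poly {poly R}}) :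
  \sum_k F k = \sum_(i < r.+1) \sum_(j < s) F (mxvec_index i j).
Proof.
rewrite pair_big /= (reindex (fun p : 'I_r.+1 * 'I_s => mxvec_index p.1 p.2)) //.
case: (curry_mxvec_bij r.+1 s) => g h1 h2.
exists g => [[a b] _|k _]; [exact: (h1 (a, b)) | ]. have := h2 k; case: (g k) => a b /= H; apply: H. by [].
Qed.

Lemma comb_Ks (c : 'I_(r.+1 * s) -> R) :
  \sum_k (c k)%:P *: bas k = Ks n (fun i => \sum_(j < s) c (mxvec_index i j) *: 'X^j).
Proof.
rewrite reidx /Ks; apply: eq_bigr => i _; rewrite scaler_suml.
apply: eq_bigr => j _; rewrite /bas ij_mx /= scalerA mul_polyC //.
Qed.

Lemma inL_single (i : 'I_r.+1) j : (j < s)%N -> inL r m n ('X^j *: Kop R r n i).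
Proof.
move=> hj.
have -> : 'X^j *: Kop R r n i = Ks n (fun i' => if i' == i then 'X^j else 0).
  rewrite /Ks (bigD1 i) //= eqxx big1 ?addr0 // => t /negbTE ->; by rewrite scale0r.
split; first exact: size_Ks.
move=> f hf; apply: Ks_closed => // t; case: eqP => _.
  by rewrite size_polyXn.
by rewrite size_poly0.
Qed.

Lemma hasDim_gen : hasDim (@inL R r m n) (r.+1 * s).
Proof.
exists bas; split.
- move=> k; case/mxvec_indexP: k => i j; rewrite /bas ij_mx /=.
  exact: inL_single.
- move=> c; rewrite comb_Ks => h0.
  have hz := @Ks_uniq r n hrn (fun i => \sum_(j < s) c (mxvec_index i j) *: 'X^j).
  have hz' : forall i, \sum_(j < s) c (mxvec_index i j) *: 'X^j = 0.
    by apply: hz => k _; rewrite h0 act0.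
  move=> k; case/mxvec_indexP: k => i j.
  by have := congr1 (fun p => p`_j) (hz' i); rewrite /= coef_ord coef0.
- move=> L [hs hf].
  have [P hP] := Ks_exists hrn hs.
  have hdeg := @Ks_deg r n hrn m P hmr.
  have hd : forall j, (size (P j) <= s)%N.
    apply: hdeg => k hk; rewrite -hP; apply: hf.
    by rewrite /inP size_polyXn.
  exists (fun k => (P (ij k).1)`_((ij k).2)); rewrite comb_Ks hP /Ks.
  apply: eq_bigr => i _; congr (_ *: _).
  under eq_bigr => j _ do rewrite ij_mx /=.
  by rewrite poly_trunc.
Qed.

End Dim.
End S.

Theorem mainTheorem18 (R : realType) (m r n : nat) :
  (m <= r)%N -> (r <= n)%N ->
  [/\ (forall L : {poly {poly R}}, inL r m n L ->
         exists! p : {ffun 'I_r.+1 -> {poly R}},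
           (forall j, inP (r - m) (p j)) /\ L = \sum_(j < r.+1) p j *: Kop R r n j),
      (forall p : 'I_r.+1 -> {poly R}, (forall j, inP (r - m) (p j)) ->
         inL r m n (\sum_(j < r.+1) p j *: Kop R r n j)),
      hasDim (@inL R r m n) (r.+1 * (r - m).+1) &
      hasDim (@inL R r 0 n) (r.+1 ^ 2)].
Proof.
move=> hmr hrn; split.
- move=> L [hs hf].
  have [P hP] := Ks_exists hrn hs.
  have hd : forall j, (size (P j) <= (r - m).+1)%N.
    apply: (@Ks_deg R r n hrn m P hmr) => k hk; rewrite -hP; apply: hf.
    by rewrite /inP size_polyXn.
  exists [ffun j => P j]; split.
    split; first by move=> j; rewrite ffunE; exact: hd j.
    by rewrite hP /Ks; apply: eq_bigr => j _; rewrite ffunE.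
  move=> q [hq hL]; apply/ffunP => j; rewrite ffunE.
  have h0 := @Ks_uniq R r n hrn (fun j => P j - q j).
  apply/eqP; rewrite -subr_eq0; apply/eqP; apply: h0 => k _.
  have -> : Ks n (fun j => P j - q j) = Ks n P - \sum_(j < r.+1) q j *: Kop R r n j.
    by rewrite /Ks -sumrB; apply: eq_bigr => i _; rewrite scalerBl.
  by rewrite -hP -hL subrr act0.
- move=> p hp; split; first exact: (size_Ks n p).
  by move=> f hf; apply: (@Ks_closed R r n hrn m p hmr hp).
- exact: hasDim_gen.
- have := @hasDim_gen R r n 0 hrn (leq0n r); rewrite subn0; exact.
Qed.
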